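(* Let $T$ be a map on $[0,1]$ and $\nu$ a $T$-invariant exponentially mixing probability measure. Let $h>0$ and $\epsilon>0$. For $n\in\mathbb N$, $N\le 2^n$ and distinct balls $B_1,\dots,B_N$ with $|B_i|=2^{-n}$ and $\nu(B_i)\ge2^{-n(h-\epsilon)}$ for all $i$, set $\mathcal C_{n,N,h}=\{x\in[0,1]:\exists\,1\le i\le N\text{ such that }\tau(x,B_i)\ge2^{nh}\}$. Then there exists an integer $n_h$, independent of $N$, such that for every $n\ge n_h$ (and every such choice of $N$ and balls), $\nu(\mathcal C_{n,N,h})\le2^{-n}$.
   Context: A $T$-invariant measure $\nu$ on $[0,1]$ is exponentially mixing if there exist constants $C>0$ and $0<\beta<1$ such that for every ball $A$, every Borel set $B$ and every $n\ge1$, $|\nu(A\cap T^{-n}B)-\nu(A)\nu(B)|\le C\beta^n\nu(B)$. $|B|$ denotes the diameter of $B$. For a ball $B$, the first hitting time is $\tau(x,B)=\inf\{n\ge1:T^nx\in B\}$, with $\tau(x,B)=\infty$ if no such $n$ exists. *)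

(* Defs.v *)
From HB Require Import structures.
From mathcomp Require Import all_boot all_order all_algebra.
From mathcomp Require Import all_classical all_reals all_analysis.
Set Implicit Arguments. Unset Strict Implicit. Unset Printing Implicit Defensive.
Import Order.TTheory GRing.Theory Num.Theory.
Import numFieldNormedType.Exports.
Local Open Scope classical_set_scope.
Local Open Scope ring_scope.

(* A ball of the metric space [0,1]: an open ball centred at a point of
   [0,1] with positive radius (seen as a subset of R; since the measures and
   dynamics considered live on [0,1], intersecting with [0,1] is immaterial
   for measures and hitting times). *)
Definition is_ball01 {R : realType} (A : set R) : Prop :=
  exists (c r : R), c \in `[(0:R), 1] /\ 0 < r /\ A = ball c r.

Definition is_ball01_diam {R : realType} (d : R) (A : set R) : Prop :=
  exists c : R, c \in `[(0:R), 1] /\ A = ball c (d / 2).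

Definition T_invariant {R : realType} (T : R -> R) (nu : probability R R) : Prop :=
  forall B : set R, measurable B -> nu (T @^-1` B) = nu B.

Definition exp_mixing {R : realType} (T : R -> R) (nu : probability R R) : Prop :=
  exists C beta : R, 0 < C /\ 0 < beta < 1 /\
    forall (A B : set R) (n : nat), is_ball01 A -> measurable B -> (1 <= n)%N ->
      `| fine (nu (A `&` (iter n T) @^-1` B)) - fine (nu A) * fine (nu B) |
        <= C * beta ^+ n * fine (nu B).

(* First hitting time tau(x,B) = inf {n >= 1 : T^n x \in B}, valued in the
   extended reals (+oo when the set is empty). *)
Definition hitting_time {R : realType} (T : R -> R) (x : R) (B : set R) : \bar R :=
  ereal_inf [set (k%:R)%:E | k in [set k : nat | (1 <= k)%N /\ B (iter k T x)]].

Definition Cset {R : realType} (T : R -> R) (n N : nat) (h : R)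
  (B : 'I_N -> set R) : set R :=
  [set x | x \in `[(0:R), 1] /\ exists i : 'I_N,
     (((2 : R) `^ (n%:R * h))%:E <= hitting_time T x (B i))%E].

(* Main.v *)
Require Import Defs.
From HB Require Import structures.
From mathcomp Require Import all_boot all_order all_algebra.
From mathcomp Require Import all_classical all_reals all_analysis.
From mathcomp Require Import ring lra zify.
Import Order.TTheory GRing.Theory Num.Theory.
Import numFieldNormedType.Exports.
Local Open Scope classical_set_scope.
Local Open Scope ring_scope.

Lemma mpre (R : realType) (f : R -> R) (S : set R) :
  measurable_fun setT f -> measurable S -> measurable (f @^-1` S).
Proof. by move=> mf mS; rewrite -[_ @^-1` _]setTI; apply: mf. Qed.

Lemma miter (R : realType) (T : R -> R) (j : nat) :
  measurable_fun setT T -> measurable_fun setT (iter j T).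
Proof.
move=> mT; elim: j => [|j IH] /=; first exact: measurable_id.
exact: (measurableT_comp mT IH).
Qed.

Lemma inv_iterT (R : realType) (T : R -> R) (nu : probability R R) (j : nat)
  (S : set R) : measurable_fun setT T -> T_invariant T nu -> measurable S ->
  nu (iter j T @^-1` S) = nu S.
Proof.
move=> mT inv; elim: j S => [|j IH] S mS //=.
have -> : (fun x => T (iter j T x)) @^-1` S = iter j T @^-1` (T @^-1` S) by [].
by rewrite IH ?inv //; apply: mpre.
Qed.

Fixpoint Fs (R : realType) (T : R -> R) (B : set R) (g : nat) (k : nat) : set R :=
  match k with
  | 0 => setT
  | k.+1 => ~` B `&` (iter g T) @^-1` (Fs R T B g k)
  end.
Arguments Fs {R}.

Lemma Fs_meas (R : realType) (T : R -> R) (B : set R) g k :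
  measurable_fun setT T -> measurable B -> measurable (Fs T B g k).
Proof.
move=> mT mB; elim: k => [|k IH] /=; first exact: measurableT.
apply: measurableI; first exact: measurableC.
by apply: mpre => //; apply: miter.
Qed.

Lemma Fs_in (R : realType) (T : R -> R) (B : set R) g k y :
  (forall j, (j < k)%N -> ~ B (iter (j * g) T y)) -> Fs T B g k y.
Proof.
elim: k y => [|k IH] y H //=; split.
  by have := H 0%N erefl; rewrite mul0n.
apply: IH => j jk; rewrite -iterD (_ : (j * g + g = j.+1 * g)%N); last by rewrite mulSn addnC.
exact: H.
Qed.


Lemma nuE (R : realType) (nu : probability R R) (A : set R) :
  measurable A -> nu A = (fine (nu A))%:E.
Proof. by move=> mA; rewrite fineK // fin_num_measure. Qed.

Lemma nu_ge0 (R : realType) (nu : probability R R) (A : set R) :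
  0 <= fine (nu A).
Proof. exact/fine_ge0/measure_ge0. Qed.

Lemma decay (R : realType) (T : R -> R) (nu : probability R R) (B : set R)
  (g : nat) (cb q : R) :
  measurable_fun setT T -> T_invariant T nu -> measurable B ->
  (forall B' : set R, measurable B' ->
     `|fine (nu (B `&` iter g T @^-1` B')) - fine (nu B) * fine (nu B')|
       <= cb * fine (nu B')) ->
  1 - fine (nu B) + cb <= q -> 0 <= q ->
  forall k, fine (nu (Fs T B g k)) <= q ^+ k.
Proof.
move=> mT inv mB mix hq q0; elim=> [|k IH].
  by rewrite /= probability_setT /= expr0.
set P := iter g T @^-1` Fs T B g k.
have mF : measurable (Fs T B g k) by apply: Fs_meas.
have mP : measurable P by apply: mpre => //; apply: miter.
have -> : Fs T B g k.+1 = P `\` B by rewrite /= setDE setIC.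
have mPB : measurable (P `\` B) by apply: measurableD.
have mPI : measurable (P `&` B) by apply: measurableI.
have := measureDI nu mP mB.
move=> e1; have e2 := congr1 fine e1; rewrite fineD ?fin_num_measure // in e2.
have eP : fine (nu P) = fine (nu (Fs T B g k)).
  by rewrite (@inv_iterT _ T nu g _ mT inv mF).
have := mix _ mF; rewrite -/P setIC => hm.
have f0 := @nu_ge0 _ nu (Fs T B g k).
have hm' : fine (nu B) * fine (nu (Fs T B g k)) - cb * fine (nu (Fs T B g k))
   <= fine (nu (P `&` B)).
  move: hm; rewrite ler_norml => /andP[h1 _]; lra.
have -> : fine (nu (P `\` B)) = fine (nu P) - fine (nu (P `&` B)) by lra.
rewrite eP exprS.
apply: (le_trans (y := q * fine (nu (Fs T B g k)))).
  have : (1 - fine (nu B) + cb) * fine (nu (Fs T B g k)) <= q * fine (nu (Fs T B g k)).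
    by apply: ler_wpM2r.
  nra.
by apply: ler_wpM2l.
Qed.


Lemma expRm1 (R : realType) : expR (-1 : R) <= 2^-1.
Proof.
rewrite expRN lef_pV2 ?posrE ?expR_gt0 //.
by have := expR_ge1Dx (1 : R); rewrite (_ : 1 + 1 = 2 :> R) //.
Qed.

Lemma beta_m (R : realType) (b : R) : 0 < b -> b < 1 ->
  exists m : nat, b ^+ m <= 2^-1.
Proof.
move=> b0 b1.
have L0 : 0 < - ln b by rewrite oppr_gt0 ln_lt0 // b0 b1.
exists (Num.trunc ((- ln b)^-1)).+1.
have hm := truncnS_gt ((- ln b)^-1).
rewrite -{1}(lnK b0) -expRM_natl.
apply: le_trans (expRm1 R); rewrite ler_expR.
set m := (Num.trunc _).+1%:R in hm *.
have : 1 <= m * (- ln b).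
  by rewrite -ler_pdivrMr // div1r ltW.
lra.
Qed.

Lemma pow2E (R : realType) (x : R) : 2 `^ x = expR (ln 2 * x).
Proof. by rewrite expRM lnK // posrE. Qed.

Lemma growth (R : realType) (A eps : R) : 0 < eps ->
  exists n0 : nat, (1 <= n0)%N /\ forall n : nat, (n0 <= n)%N ->
    A * (n%:R) ^+ 2 < 2 `^ (n%:R * eps).
Proof.
move=> e0.
have l2 : 0 < ln (2 : R) by rewrite ln_gt0 // ltr1n.
set c := ln (2 : R) * eps.
have c0 : 0 < c by rewrite mulr_gt0.
exists (Num.trunc (6 * `|A| / c ^+ 3)).+1; split => // n hn.
have hn' : 6 * `|A| / c ^+ 3 < n%:R.
  apply: lt_le_trans (truncnS_gt _) _; by rewrite ler_nat.
rewrite pow2E (_ : ln 2 * (n%:R * eps) = c * n%:R); last by rewrite /c; ring.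
have h1 := expR_ge1Dxn 2 (mulr_ge0 (ltW c0) (ler0n R n)).
apply: lt_le_trans h1.
rewrite (_ : (2.+1)`!%:R = 6 :> R) //.
have c3 : 0 < c ^+ 3 by rewrite exprn_gt0.
have : 6 * `|A| < n%:R * c ^+ 3 by rewrite -ltr_pdivrMr.
have : 0 <= (n%:R : R) ^+ 2 by rewrite sqr_ge0.
have : A <= `|A| by rewrite ler_norm.
move=> hA hn2 hlt.
have e : (c * n%:R) ^+ 3 = (n%:R * c ^+ 3) * (n%:R) ^+ 2 by ring.
rewrite e.
have : 6 * `|A| * n%:R ^+ 2 <= n%:R * c ^+ 3 * n%:R ^+ 2.
  by apply: ler_wpM2r => //; apply: ltW.
have : A * n%:R ^+ 2 <= `|A| * n%:R ^+ 2 by apply: ler_wpM2r.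
lra.
Qed.
Lemma final_num (R : realType) (P : R) (n N k : nat) :
  0 < P -> 4 * n%:R * P < k%:R -> (N <= 2 ^ n)%N -> 0 <= 1 - P^-1 / 2 ->
  (1 - P^-1 / 2) ^+ k *+ N <= 2 ^- n.
Proof.
move=> P0 hk hN q0.
have Pi0 : 0 < P^-1 by rewrite invr_gt0.
have hq1 : 1 - P^-1 / 2 <= expR (- (P^-1 / 2)) by exact: expR_ge1Dx.
have h1 : (1 - P^-1 / 2) ^+ k <= expR (- (P^-1 / 2)) ^+ k.
  by apply: lerXn2r => //; rewrite nnegrE ?expR_ge0.
have h2 : expR (- (P^-1 / 2)) ^+ k <= (2^-1) ^+ (n + n).
  rewrite -expRM_natl.
  apply: (le_trans (y := expR (-1) ^+ (n + n))); last first.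
    by apply: lerXn2r => //; rewrite ?nnegrE ?expR_ge0 // expRm1.
  rewrite -expRM_natl ler_expR natrD.
  have h4 : 4 * n%:R < k%:R * P^-1.
    by rewrite ltr_pdivlMr.
  have e : k%:R * - (P^-1 / 2) = - (k%:R * P^-1) / 2 by ring.
  rewrite e; lra.
have hN' : (N%:R : R) <= 2 ^+ n by rewrite -natrX ler_nat.
rewrite -mulr_natr.
apply: (le_trans (y := (2^-1) ^+ (n + n) * 2 ^+ n)).
  apply: ler_pM => //; [exact: exprn_ge0 | exact: le_trans h1 h2].
by rewrite exprD -mulrA exprVn mulVf ?mulr1 // expf_neq0.
Qed.


Lemma hit_ge (R : realType) (T : R -> R) x (Bo : set R) (K : R) :
  (K%:E <= hitting_time T x Bo)%E <->
  (forall j, (1 <= j)%N -> Bo (iter j T x) -> K <= j%:R).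
Proof.
rewrite /hitting_time; split.
  move=> /ereal_infP H j j1 Bj.
  by have := H _ (ex_intro2 _ _ j (conj j1 Bj) erefl); rewrite lee_fin.
move=> H; apply/ereal_infP => _ [j [j1 Bj] <-]; rewrite lee_fin; exact: H.
Qed.

Definition Dset (R : realType) (T : R -> R) (K : R) (Bo : set R) : set R :=
  [set x | forall j, (1 <= j)%N -> Bo (iter j T x) -> K <= j%:R].
Arguments Dset {R}.

Lemma Dset_meas (R : realType) (T : R -> R) (K : R) (Bo : set R) :
  measurable_fun setT T -> measurable Bo -> measurable (Dset T K Bo).
Proof.
move=> mT mB.
have -> : Dset T K Bo = \bigcap_j (if (1 <= j)%N && (j%:R < K)
    then iter j T @^-1` (~` Bo) else setT).
  rewrite eqEsubset; split => x.
    move=> H j _; case: ifP => // /andP[j1 jK] /= Bj.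
    by have := H j j1 Bj; rewrite leNgt jK.
  move=> H j j1 Bj; have [//|jK] := leP K j%:R.
  by have := H j I; rewrite j1 jK /=.
apply: bigcapT_measurable => j; case: ifP => // _.
by apply: mpre; [apply: miter | apply: measurableC].
Qed.


Theorem lemma5p3 (R : realType) (T : R -> R) (nu : probability R R) :
  measurable_fun setT T ->
  (forall x, x \in `[(0:R), 1] -> T x \in `[(0:R), 1]) ->
  nu (`[(0:R), 1]%classic) = 1%E ->
  T_invariant T nu ->
  exp_mixing T nu ->
  forall h eps : R, 0 < h -> 0 < eps ->
  exists n_h : nat, forall (n N : nat) (B : 'I_N -> set R),
    leq n_h n -> leq N (expn 2 n) ->
    injective B ->
    (forall i, is_ball01_diam ((2 : R) ^- n) (B i)) ->
    (forall i, ((2 : R) `^ (- (n%:R * (h - eps))))%:E <= nu (B i))%E ->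
    (nu (Cset T n h B) <= ((2 : R) ^- n)%:E)%E.
Proof.
move=> mT _ _ inv [C [be [C0 [/andP[be0 be1] mix]]]] h eps h0 e0.
have [m hm] := @beta_m _ be be0 be1.
have m1 : (1 <= m)%N.
  by case: m hm => //; rewrite expr0; lra.
set H := (Num.trunc h).+1.
set c0 := (Num.trunc (2 * C)).+1.
have [n0 [n01 hn0]] := @growth _ (5 * m%:R * (H + c0)%:R) eps e0.
exists n0 => n N B hn hN Binj Bball Bnu.
have n1 : (1 <= n)%N := leq_trans n01 hn.
have mBo : forall i, measurable (B i).
  by move=> i; have [c [_ ->]] := Bball i; exact: measurable_realfun.measurable_ball.
have [N0|Npos] := posnP N.
  rewrite (_ : Cset T n h B = set0) ?measure0 ?lee_fin ?invr_ge0 ?exprn_ge0 //.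
  apply/seteqP; split => x //; case=> _ [i _]; by have := ltn_ord i; rewrite {2}N0.

set P := 2 `^ (n%:R * (h - eps)).
have P0 : 0 < P by rewrite powR_gt0.
have hB : forall i, P^-1 <= fine (nu (B i)).
  by move=> i; have := Bnu i; rewrite powRN (@nuE _ nu _ (mBo i)) lee_fin.
have hB1 : forall i, fine (nu (B i)) <= 1.
  by move=> i; have := probability_le1 nu (mBo i); rewrite (@nuE _ nu _ (mBo i)) lee_fin.
have P1 : 1 <= P.
  by rewrite -invf_le1 //; exact: (le_trans (hB (Ordinal Npos)) (hB1 (Ordinal Npos))).
set g := (m * (n * H + c0))%N.
have g1 : (1 <= g)%N by rewrite /g muln_gt0 m1 addn_gt0 /c0 orbT.
set k := (Num.trunc (4 * n%:R * P)).+1.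
have hk : 4 * n%:R * P < k%:R := truncnS_gt _.
have hk2 : k%:R <= 4 * n%:R * P + 1.
  rewrite /k -addn1 natrD lerD2r truncn_le.
  by rewrite !mulr_ge0 // ?ler0n // ltW.
have n1R : 1 <= (n%:R : R) by rewrite ler1n.
set K := 2 `^ (n%:R * h).
have KE : K = P * 2 `^ (n%:R * eps).
  rewrite /K /P -powRD; last by apply/implyP => _; rewrite pnatr_eq0.
  by congr (2 `^ _); ring.
have hkg : (k * g)%:R < K.
  have hg : (g <= m * (H + c0) * n)%N by rewrite /g; nia.
  have hg' : (g%:R : R) <= m%:R * (H + c0)%:R * n%:R by rewrite -!natrM ler_nat.
  have hgr := hn0 n hn.
  have g0 : 0 <= (g%:R : R) by [].
  have k5 : k%:R <= 5 * n%:R * P by nra.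
  rewrite natrM KE.
  have A0 : 0 <= m%:R * (H + c0)%:R :> R by rewrite mulr_ge0.
  nra.

have hcb : C * be ^+ g <= P^-1 / 2.
  have hX : (2^-1 : R) ^+ (n * H) <= P^-1.
    rewrite exprVn lef_pV2 ?posrE ?exprn_gt0 //.
    rewrite -powR_mulrn // ler_powR ?ler1n // natrM.
    have hH : h < H%:R := truncnS_gt _.
    have n0R : 0 <= (n%:R : R) by [].
    nra.
  have hY : C * (2^-1 : R) ^+ c0 <= 2^-1.
    have hc : 2 * C < c0%:R := truncnS_gt _.
    have hc2 : (c0%:R : R) <= 2 ^+ c0.
      by rewrite -natrX ler_nat ltnW // ltn_expl.
    rewrite exprVn; have p0 : (0 : R) < 2 ^+ c0 by rewrite exprn_gt0.
    rewrite -ler_pdivlMr ?invr_gt0 // invrK.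
    lra.
  have hbg : be ^+ g <= (2^-1) ^+ (n * H) * (2^-1) ^+ c0.
    rewrite -exprD /g exprM; apply: lerXn2r => //; rewrite ?nnegrE ?exprn_ge0 //.
    exact: ltW.
  have X0 : (0 : R) <= (2^-1) ^+ (n * H) by rewrite exprn_ge0.
  have Y0 : (0 : R) <= (2^-1) ^+ c0 by rewrite exprn_ge0.
  have Pi0 : 0 <= P^-1 by rewrite invr_ge0 ltW.
  have : C * be ^+ g <= C * ((2^-1) ^+ (n * H) * (2^-1) ^+ c0).
    by apply: ler_wpM2l => //; apply: ltW.
  nra.

set q := 1 - P^-1 / 2.
have Pi1 : P^-1 <= 1 by rewrite invf_le1.
have Pi0 : 0 < P^-1 by rewrite invr_gt0.
have q0 : 0 <= q by rewrite /q; lra.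
have hU : forall i, fine (nu (iter g T @^-1` Fs T (B i) g k)) <= q ^+ k.
  move=> i.
  have mF : measurable (Fs T (B i) g k) by apply: Fs_meas.
  rewrite (@inv_iterT _ T nu g _ mT inv mF).
  apply: (@decay _ T nu (B i) g (C * be ^+ g) q mT inv (mBo i)) => //.
    move=> B' mB'; apply: mix => //.
    have [c [c01 ->]] := Bball i; exists c, (2 ^- n / 2); by split => //; split => //; rewrite divr_gt0 // invr_gt0 exprn_gt0.
  by have := hB i; rewrite /q; lra.
have hqk : q ^+ k *+ N <= 2 ^- n by apply: final_num.
set W := fun j : nat => if (insub j : option 'I_N) is Some i
  then Dset T K (B i) else set0.
set V := fun j : nat => if (insub j : option 'I_N) is Some i
  then iter g T @^-1` Fs T (B i) g k else set0.
have mV : forall j, measurable (V j).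
  move=> j; rewrite /V; case: insub => [i|] //.
  by apply: mpre; [apply: miter | apply: Fs_meas].
have CE : Cset T n h B = `[(0:R), 1]%classic `&` \big[setU/set0]_(j < N) W j.
  rewrite -bigcup_mkord eqEsubset; split => x.
    move=> [x01 [i /hit_ge Hi]]; split => //; exists i => //=.
    by rewrite /W valK.
  move=> [x01 [j /= jN]]; rewrite /W insubT /= => Hj; split => //.
  by exists (Ordinal jN); apply/hit_ge.
have mC : measurable (Cset T n h B).
  rewrite CE; apply: measurableI; first exact: measurable_itv.
  apply: bigsetU_measurable => j _; rewrite /W; case: insub => [i|] //.
  by apply: Dset_meas.
have sub : Cset T n h B `<=` \big[setU/set0]_(j < N) V j.
  move=> x [_ [i Hi]]; rewrite -bigcup_mkord; exists i => //=; rewrite /V valK /=.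
  change (Fs T (B i) g k (iter g T x)); apply: Fs_in => j jk Bj; rewrite -iterD in Bj.
  have j1 : (1 <= j * g + g)%N by rewrite addn_gt0 g1 orbT.
  have := (hit_ge _ _ _ _ _).1 Hi _ j1 Bj.
  have hjk : (j * g + g <= k * g)%N by rewrite (_ : (j * g + g = j.+1 * g)%N) ?leq_mul2r ?jk ?orbT // mulSn addnC.
  have : ((j * g + g)%:R : R) <= (k * g)%:R by rewrite ler_nat.
  move=> hle hK; have := lt_le_trans hkg (le_trans hK hle); by rewrite ltxx.
apply: (le_trans (le_measure nu _ _ sub)); rewrite ?inE //.
  by apply: bigsetU_measurable => j _.
apply: (le_trans (Boole_inequality nu (fun j _ => mV j))).
apply: (le_trans (y := \sum_(j < N) (q ^+ k)%:E)).
  apply: lee_sum => j _; rewrite /V; case: insub => [i|].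
    have mVi : measurable (iter g T @^-1` Fs T (B i) g k).
      by apply: mpre; [apply: miter | apply: Fs_meas].
    suff : (nu (iter g T @^-1` Fs T (B i) g k) <= (q ^+ k)%:E)%E by [].
    by rewrite (@nuE _ nu _ mVi) lee_fin; exact: hU.
  by rewrite measure0 lee_fin exprn_ge0.
by rewrite sumEFin lee_fin sumr_const card_ord.
Qed.
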